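(* Let $X$ be a Tychonoff space which is a $P$-space. Then $X$ is an $F_cP$-space, i.e. $C_c(X)_F$ is a von Neumann regular ring.
   Context: $C_c(X)_F$ denotes the set of all functions $f:X\to\mathbb{R}$ whose range is countable and whose set of points of discontinuity is finite; it is a commutative ring with unity under pointwise operations. A Tychonoff space $X$ is a $P$-space if every zero set of a continuous real-valued function on $X$ is open (equivalently, the ring $C(X)$ is von Neumann regular). A commutative ring $R$ is von Neumann regular if for every $a\in R$ there is $r\in R$ with $a=a^2r$. $X$ is an $F_cP$-space if $C_c(X)_F$ is von Neumann regular. *)

(* Defs.v *)
From HB Require Import structures.
From mathcomp Require Import all_boot all_order all_algebra.
From mathcomp Require Import all_classical all_reals all_analysis.
Set Implicit Arguments. Unset Strict Implicit. Unset Printing Implicit Defensive.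
Import Order.TTheory GRing.Theory Num.Theory numFieldNormedType.Exports.
Local Open Scope classical_set_scope.
Local Open Scope ring_scope.

Definition tychonoff_space (R : realType) (X : topologicalType) : Prop :=
  accessible_space X /\
  (forall (a : X) (B : set X), closed B -> ~ B a ->
     exists f : X -> R, continuous f /\ f a = 0 /\ (forall b, B b -> f b = 1)).

Definition zero_set (R : realType) (X : Type) (f : X -> R) : set X :=
  [set x | f x = 0].

Definition P_space (R : realType) (X : topologicalType) : Prop :=
  forall f : X -> R, continuous f -> open (zero_set f).

Definition discontinuities (R : realType) (X : topologicalType) (f : X -> R)
  : set X := [set x | ~ {for x, continuous f}].

Definition in_CcF (R : realType) (X : topologicalType) (f : X -> R) : Prop :=
  countable (range f) /\ finite_set (discontinuities f).

(* C_c(X)_F is von Neumann regular (pointwise ring operations). *)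
Definition FcP_space (R : realType) (X : topologicalType) : Prop :=
  forall f : X -> R, in_CcF f ->
    exists r : X -> R, in_CcF r /\ (forall x, f x = f x ^+ 2 * r x).

(* Main.v *)
Require Import Defs.
From mathcomp Require Import all_boot all_order all_algebra.
From mathcomp Require Import all_classical all_reals all_analysis.
Set Implicit Arguments. Unset Strict Implicit. Unset Printing Implicit Defensive.
Import Order.TTheory GRing.Theory Num.Theory numFieldNormedType.Exports.
Local Open Scope classical_set_scope.
Local Open Scope ring_scope.

Lemma open_near (X : topologicalType) (A : set X) (y : X) :
  open A -> A y -> \forall z \near y, A z.
Proof. by move=> oA Ay; apply: open_nbhs_nbhs; split. Qed.

Lemma key (R : realType) (X : topologicalType) (f : X -> R) (x : X) :
  tychonoff_space R X -> P_space R X -> finite_set (discontinuities f) ->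
  ~ discontinuities f x -> f x = 0 -> \forall y \near x, f y = 0.
Proof.
move=> [acc tych] P fD nDx fx0.
have cD : closed (discontinuities f).
  by move/accessible_finite_set_closed: acc; apply.
have [k [kc [kx0 kD]]] := tych x _ cD nDx.
have oZ : open (zero_set k) by exact: P.
have cZ : closed (zero_set k).
  have c0 : closed [set (0:R)] by apply: accessible_closed_set1; apply: hausdorff_accessible; exact: Rhausdorff.
  exact: ((continuous_closedP k).1 kc _ c0).
pose g y := if k y == 0 then f y else 0.
have gc : continuous g.
  move=> y; have [ky0|kyn] := eqVneq (k y) 0.
    have fy : {for y, continuous f}.
      apply: contrapT => nf; have := kD y nf; rewrite ky0 => /eqP.
      by rewrite eq_sym oner_eq0.
    have nz : \forall z \near y, k z = 0 by exact: open_near oZ ky0.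
    rewrite /continuous_at /g ky0 eqxx; apply: cvg_trans fy.
    apply: near_eq_cvg; near=> z.
    by rewrite (near nz z) // eqxx.
  have nz : \forall z \near y, ~ zero_set k z.
    by apply: open_near; [rewrite openC|rewrite /zero_set /= => /eqP; rewrite (negbTE kyn)].
  apply: (near_cst_continuous 0); near=> z.
  rewrite /g; case: eqP => // kz; exfalso; exact: (near nz z).
have oG : open (zero_set g) by exact: P.
have gx : zero_set g x by rewrite /zero_set /= /g kx0 eqxx.
have n1 := open_near oG gx.
have n2 := open_near oZ kx0.
near=> z.
have kz : zero_set k z by exact: (near n2 z).
have gz : zero_set g z by exact: (near n1 z).
by move: gz; rewrite /zero_set /= /g kz eqxx.
Unshelve. all: by end_near.
Qed.

Theorem theorem7p5 (R : realType) (X : topologicalType) :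
  tychonoff_space R X -> P_space R X -> FcP_space R X.
Proof.
move=> tX PX f [cf ff].
exists (fun x => (f x)^-1); split; last first.
  move=> x; have [->|nz] := eqVneq (f x) 0; first by rewrite invr0 mulr0.
  by rewrite expr2 mulfK.
split.
  have -> : range (fun x => (f x)^-1) = GRing.inv @` range f.
    apply/seteqP; split => y.
      by case=> x _ <-; exists (f x) => //; exists x.
    by case=> _ [x _ <-] <-; exists x.
  exact: sub_countable (card_image_le _ _) cf.
have ff2 := ff; apply: sub_finite_set ff2 => x /= nc; apply: contrapT => fc; apply: nc.
have [fx0|nz] := eqVneq (f x) 0.
  have := key tX PX ff fc fx0 => nz.
  apply: (near_cst_continuous 0); near=> z.
  by rewrite (near nz z) // invr0.
have fc' : {for x, continuous f} by apply: contrapT.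
exact: (continuous_comp fc' (inv_continuous nz)).
Unshelve. all: by end_near.
Qed.
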